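(* Let $1\le K\le N$. Then $$\mathcal{C}_{N,K}=\mathrm{conv}\left\{R_\sigma\left(\mathcal{C}_{K,K}\oplus 0^{N-K}\right)\ :\ \sigma\in S\right\},$$ where $S\subseteq S_N$ is the set of permutations $\sigma$ of $\{1,\dots,N\}$ for which there exists a subset $\{g_1,\dots,g_K\}\subseteq\{1,\dots,N\}$ with $\sigma(i)=g_i$ for all $i=1,\dots,K$.
   Context: A behavior on $N$ input bits is a family $P=(P(a|\mathbf{x}))_{a\in\{0,1\},\mathbf{x}\in\{0,1\}^N}$ with $P(a|\mathbf{x})\ge0$ and $P(0|\mathbf{x})+P(1|\mathbf{x})=1$; the set of all behaviors is $\mathcal{L}_N\subset\mathbb{R}^{2^{N+1}}$. $\mathcal{C}_{N,K}$ is the set of $P\in\mathcal{L}_N$ for which there exist non-negative weights $q_{j_1\cdots j_K}$ summing to one, indexed by $K$-tuples of pairwise distinct indices in $\{1,\dots,N\}$, and conditional distributions $P(a|x_{j_1}\cdots x_{j_K})$ depending only on $x_{j_1},\dots,x_{j_K}$, with $P(a|\mathbf{x})=\sum q_{j_1\cdots j_K}P(a|x_{j_1}\cdots x_{j_K})$. $\mathcal{C}_{K,K}\oplus 0^{N-K}$ denotes the copy of $\mathcal{C}_{K,K}=\mathcal{L}_K$ embedded in $\mathcal{L}_N$, i.e. the set of behaviors $P\in\mathcal{L}_N$ such that $P(a|\mathbf{x})$ depends only on $x_1,\dots,x_K$ (a hypercube whose vertices are the deterministic behaviors $\delta_{a,f(\mathbf{x})}$ with $f$ depending only on $x_1,\dots,x_K$).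 For $\sigma\in S_N$, $R_\sigma$ is the linear map on behaviors given by $(R_\sigma P)(a|x_1,\dots,x_N)=P(a|x_{\sigma(1)},\dots,x_{\sigma(N)})$. $\mathrm{conv}$ denotes convex hull. *)

(* Defs.v *)
From mathcomp Require Import all_boot all_order all_fingroup all_algebra.
From mathcomp Require Import reals.
Set Implicit Arguments. Unset Strict Implicit. Unset Printing Implicit Defensive.
Import Order.TTheory GRing.Theory Num.Theory.
Local Open Scope ring_scope.

(* Inputs x in {0,1}^N, indices 1..N rendered as 'I_N (0-based). *)
Definition input (N : nat) := {ffun 'I_N -> bool}.

(* A vector in R^{2^{N+1}}: P (a, x) = P(a|x). *)
Definition behavior (R : realType) (N : nat) := {ffun bool * input N -> R}.

Definition is_behavior (R : realType) (N : nat) (P : behavior R N) : Prop :=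
  (forall a x, 0 <= P (a, x)) /\ (forall x, P (false, x) + P (true, x) = 1).

(* C_{N,K}: weights q indexed by K-tuples j : 'I_K -> 'I_N of pairwise distinct
   indices (injective j), conditional distributions Q j on K bits evaluated at
   (x_{j_1},...,x_{j_K}). *)
Definition CNK (R : realType) (N K : nat) (P : behavior R N) : Prop :=
  is_behavior P /\
  exists (q : {ffun 'I_K -> 'I_N} -> R) (Q : {ffun 'I_K -> 'I_N} -> behavior R K),
    (forall j, injectiveb (j : {ffun 'I_K -> 'I_N}) -> 0 <= q j) /\
    \sum_(j : {ffun 'I_K -> 'I_N} | injectiveb (j : {ffun 'I_K -> 'I_N})) q j = 1 /\
    (forall j, injectiveb (j : {ffun 'I_K -> 'I_N}) -> is_behavior (Q j)) /\
    (forall a (x : input N),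
        P (a, x) = \sum_(j : {ffun 'I_K -> 'I_N} | injectiveb (j : {ffun 'I_K -> 'I_N}))
                      q j * Q j (a, [ffun i => x (j i)])).

(* C_{K,K} (+) 0^{N-K}: behaviors in L_N depending only on x_1..x_K. *)
Definition embedKK (R : realType) (N K : nat) (P : behavior R N) : Prop :=
  is_behavior P /\
  (forall a (x y : input N),
      (forall i : 'I_N, (i < K)%N -> x i = y i) -> P (a, x) = P (a, y)).

Definition Rperm (R : realType) (N : nat) (s : {perm 'I_N}) (P : behavior R N)
  : behavior R N :=
  [ffun ax : bool * input N => P (ax.1, [ffun i => ax.2 (s i)])].

Definition Sperm (N K : nat) (s : {perm 'I_N}) : Prop :=
  exists g : 'I_K -> 'I_N, injective g /\
    forall (i : 'I_K) (j : 'I_N), nat_of_ord j = nat_of_ord i -> s j = g i.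

Definition conv (R : realType) (N : nat) (A : behavior R N -> Prop)
  (P : behavior R N) : Prop :=
  exists (n : nat) (w : 'I_n -> R) (p : 'I_n -> behavior R N),
    (forall i, 0 <= w i) /\ \sum_(i < n) w i = 1 /\ (forall i, A (p i)) /\
    (forall ax, P ax = \sum_(i < n) w i * p i ax).

Definition union_rot (R : realType) (N K : nat) (P : behavior R N) : Prop :=
  exists s : {perm 'I_N}, Sperm K s /\
    exists P0 : behavior R N, embedKK K P0 /\ P = Rperm s P0.

(* Main.v *)
Require Import Defs.
From mathcomp Require Import all_boot all_order all_fingroup all_algebra.
From mathcomp Require Import reals.
From mathcomp Require Import boolp.
Set Implicit Arguments. Unset Strict Implicit. Unset Printing Implicit Defensive.
Import Order.TTheory GRing.Theory Num.Theory.
Local Open Scope ring_scope.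

Lemma perm_ext (N K : nat) (j : 'I_K -> 'I_N) : injective j ->
  exists s : {perm 'I_N}, forall (k : 'I_K) (m : 'I_N),
    nat_of_ord m = nat_of_ord k -> s m = j k.
Proof.
move=> jinj.
set A := map j (enum 'I_K).
set t := A ++ [seq x <- enum 'I_N | x \notin A].
have : perm_eq t (ord_tuple N).
  apply: uniq_perm.
  - rewrite cat_uniq map_inj_uniq // enum_uniq filter_uniq ?enum_uniq // andbT /=.
    apply/hasPn => x; rewrite mem_filter => /andP[] //.
  - by rewrite val_ord_tuple enum_uniq.
  - move=> x; rewrite val_ord_tuple mem_cat mem_filter mem_enum /=.
    by case: (x \in A).
case/tuple_permP => p Hp; exists p => k m Hm.
have := congr1 (fun s => nth (j k) s m) Hp.
rewrite -(tnth_nth (j k) [tuple tnth (ord_tuple N) (p i) | i < N] m).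
rewrite tnth_mktuple tnth_ord_tuple => <-.
rewrite Hm nth_cat size_map size_enum_ord ltn_ord.
by rewrite (nth_map k) ?size_enum_ord ?ltn_ord // nth_ord_enum.
Qed.

Lemma Sperm_all (N K : nat) (KN : (K <= N)%N) (s : {perm 'I_N}) : Sperm K s.
Proof.
exists (fun i => s (widen_ord KN i)); split.
  by move=> a b /perm_inj /(congr1 val) /= /val_inj.
by move=> i j Hj; congr (s _); apply: val_inj.
Qed.

Lemma sum_enum_val (R : realType) (T : finType) (F : T -> R) :
  \sum_(i < #|T|) F (enum_val i) = \sum_j F j.
Proof. have := @big_enum_val R 0 +%R T (pred_of_simpl predT) F. move=> H. symmetry. exact: H. Qed.

Definition dflt (R : realType) (N : nat) : behavior R N :=
  [ffun ax : bool * input N => if ax.1 then 1 else 0].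

Lemma dflt_beh (R : realType) N : is_behavior (dflt R N).
Proof. split => [a x|x]; rewrite !ffunE /=; last by rewrite add0r.
by case: a; rewrite ?ler01 ?lexx. Qed.

Lemma dir1 (R : realType) (N K : nat) (KN : (K <= N)%N) (P : behavior R N) :
  CNK K P -> conv (union_rot K) P.
Proof.
move=> [_ [q [Q [q0 [q1 [Qb HPQ]]]]]].
pose F (j : {ffun 'I_K -> 'I_N}) := if injectiveb j then q j else 0.
pose G (j : {ffun 'I_K -> 'I_N}) : behavior R N :=
  if injectiveb j then [ffun ax : bool * input N => Q j (ax.1, [ffun k => ax.2 (j k)])]
  else dflt R N.
exists #|{ffun 'I_K -> 'I_N}|, (fun i => F (enum_val i)), (fun i => G (enum_val i)).
split; [|split; [|split]].
- by move=> i; rewrite /F; case: ifP => // /q0.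
- by rewrite sum_enum_val -big_mkcond.
- move=> i; set j := enum_val i; rewrite /G.
  case: ifP => ji.
    have [s Hs] := perm_ext (injectiveP _ ji).
    exists s; split; first exact: Sperm_all.
    exists [ffun ax : bool * input N => Q j (ax.1, [ffun k => ax.2 (widen_ord KN k)])].
    split; first split.
    + have [Qb0 Qb1] := Qb j ji.
      by split => [a x|x]; rewrite !ffunE /=.
    + move=> a x y Hxy; rewrite !ffunE /=; do 2 f_equal; apply/ffunP => k.
      rewrite !ffunE. by move: (Hxy (widen_ord KN k) (ltn_ord k)).
    + apply/ffunP => -[a x]; rewrite !ffunE /=; do 2 f_equal; apply/ffunP => k.
      by rewrite !ffunE (Hs k).
  exists 1%g; split; first exact: Sperm_all.
  exists (dflt R N); split; first by split; [exact: dflt_beh|move=> a x y _; rewrite !ffunE].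
  by apply/ffunP => -[a x]; rewrite !ffunE.
- move=> [a x]; rewrite (sum_enum_val (fun j => F j * G j (a, x))) HPQ big_mkcond /=.
  apply: eq_bigr => j _; rewrite /F /G; case: ifP => ji; last by rewrite mul0r.
  by rewrite ffunE.
Qed.

Lemma dir2 (R : realType) (N K : nat) (KN : (K.+1 <= N)%N) (P : behavior R N) :
  conv (union_rot K.+1) P -> CNK K.+1 P.
Proof.
move=> [n [w [p [w0 [w1 [Hp HP]]]]]].
have H' : forall i, exists sP : {perm 'I_N} * behavior R N,
    embedKK K.+1 sP.2 /\ p i = Rperm sP.1 sP.2.
  move=> i; have [s [_ [P0 [H1 H2]]]] := Hp i.
  by exists (s, P0).
pose sP i := proj1_sig (cid (H' i)).
have sPP i : embedKK K.+1 (sP i).2 /\ p i = Rperm (sP i).1 (sP i).2.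
  exact: (proj2_sig (cid (H' i))).
pose j i : {ffun 'I_K.+1 -> 'I_N} := [ffun k => (sP i).1 (widen_ord KN k)].
have jinj i : injectiveb (j i).
  apply/injectiveP => a b; rewrite !ffunE => /perm_inj /(congr1 val) /= /val_inj //.
pose Qi i : behavior R K.+1 := [ffun ay : bool * input K.+1 =>
   (sP i).2 (ay.1, [ffun m : 'I_N => if (m < K.+1)%N then ay.2 (inord m) else false])].
have Qib i : is_behavior (Qi i).
  have [[[b0 b1] _] _] := sPP i.
  by split => [a x|x]; rewrite !ffunE /=.
have key i a x : p i (a, x) = Qi i (a, [ffun k => x (j i k)]).
  have [[_ Hd] ->] := sPP i.
  rewrite !ffunE /=; apply: Hd => m mK; rewrite !ffunE mK.
  by congr (x ((sP i).1 _)); apply: val_inj; rewrite /= inordK.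

pose q (jj : {ffun 'I_K.+1 -> 'I_N}) := \sum_(i < n | j i == jj) w i.
pose Q (jj : {ffun 'I_K.+1 -> 'I_N}) : behavior R K.+1 :=
  if q jj == 0 then dflt R K.+1 else
  [ffun ay => (\sum_(i < n | j i == jj) w i * Qi i ay) / q jj].
have q0 jj : 0 <= q jj by apply: sumr_ge0 => i _.
have Hpart (F : 'I_n -> R) : \sum_(i < n) F i =
    \sum_(jj : {ffun 'I_K.+1 -> 'I_N} | injectiveb jj) \sum_(i < n | j i == jj) F i.
  by rewrite (partition_big j (fun jj : {ffun 'I_K.+1 -> 'I_N} => injectiveb jj)).
have Pe a x : P (a, x) = \sum_(i < n) w i * Qi i (a, [ffun k => x (j i k)]).
  by rewrite HP; apply: eq_bigr => i _; rewrite key.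
split.
  split => [a x|x].
    by rewrite Pe; apply: sumr_ge0 => i _; apply: mulr_ge0 => //; case: (Qib i).
  rewrite !Pe -big_split /= -w1; apply: eq_bigr => i _.
  by rewrite -mulrDr; case: (Qib i) => _ ->; rewrite mulr1.
exists q, Q; split; [by []|split; [|split]].
- by rewrite -w1 Hpart.
- move=> jj _; rewrite /Q; case: eqP => qz; first exact: dflt_beh.
  split => [a x|x]; rewrite !ffunE.
    apply: divr_ge0 => //; apply: sumr_ge0 => i _; apply: mulr_ge0 => //.
    by case: (Qib i).
  rewrite -mulrDl -big_split /=.
  rewrite (eq_bigr (fun i => w i)); first by rewrite divff //; apply/eqP.
  by move=> i _; rewrite -mulrDr; case: (Qib i) => _ ->; rewrite mulr1.
- move=> a x; rewrite Pe Hpart; apply: eq_bigr => jj _.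
  rewrite (eq_bigr (fun i => w i * Qi i (a, [ffun k => x (jj k)]))); last first.
    by move=> i /eqP ->.
  rewrite /Q; case: eqP => qz.
    rewrite qz mul0r; apply: big1 => i ji.
    have /psumr_eq0P H0 : q jj = 0 := qz.
    by rewrite H0 ?mul0r // => i' _; apply: w0.
  by rewrite ffunE mulrC divfK //; apply/eqP.
Qed.

Theorem lemma1 (R : realType) (N K : nat) :
  (1 <= K)%N -> (K <= N)%N ->
  forall P : behavior R N, CNK K P <-> conv (union_rot K) P.
Proof.
case: K => // K _ KN P; split; [exact: dir1|exact: dir2].
Qed.
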